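(* A $T_1$-space $X$ has a regular base at non-isolated points if and only if $X$ has a strong development at non-isolated points.
   Context: $I(X)$ is the set of isolated points of $X$, $\mathcal{I}(X)=\{\{x\}:x\in I(X)\}$, $\mathrm{st}(A,\mathcal{W})=\bigcup\{W\in\mathcal{W}:W\cap A\neq\emptyset\}$. A base $\mathcal{B}$ is regular at $x$ if for every neighborhood $U$ of $x$ there is an open $V$ with $x\in V\subset U$ such that $\{B\in\mathcal{B}: B\cap V\neq\emptyset,\ B\not\subset U\}$ is finite; it is a regular base at non-isolated points if it is regular at every $x\in X\setminus I(X)$. A sequence $\{\mathcal{W}_i\}_{i\in\mathbb{N}}$ of open covers of $X$ with $\mathcal{I}(X)\subset\bigcup_i\mathcal{W}_i$ is a strong development at non-isolated points if for every $x\in X\setminus I(X)$ and every neighborhood $U$ of $x$ there are a neighborhood $V$ of $x$ and $i\in\mathbb{N}$ with $\mathrm{st}(V,\mathcal{W}_i)\subset U$. *)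

(* Defs.v *)
From Stdlib Require Import List Classical.

Set Implicit Arguments.

Definition set (X : Type) := X -> Prop.
Definition family (X : Type) := set X -> Prop.

Record topology (X : Type) := Topology {
  is_open : set X -> Prop;
  open_full : is_open (fun _ => True);
  open_inter : forall U V, is_open U -> is_open V -> is_open (fun x => U x /\ V x);
  open_union : forall F : family X, (forall U, F U -> is_open U) ->
                 is_open (fun x => exists U, F U /\ U x)
}.

Section Topo.
Variables (X : Type) (T : topology X).

Definition subset (A B : set X) : Prop := forall x, A x -> B x.
Definition meets (A B : set X) : Prop := exists x, A x /\ B x.

Definition nbhd (x : X) (U : set X) : Prop :=
  exists O, is_open T O /\ O x /\ subset O U.

Definition T1 : Prop :=
  forall x y : X, x <> y -> exists U, is_open T U /\ U x /\ ~ U y.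

Definition isolated (x : X) : Prop := is_open T (fun y => y = x).

Definition finite_family (F : family X) : Prop :=
  exists l : list (set X), forall B, F B -> In B l.

Definition base (B : family X) : Prop :=
  (forall U, B U -> is_open T U) /\
  (forall U, is_open T U -> forall x, U x -> exists V, B V /\ V x /\ subset V U).

Definition regular_at (B : family X) (x : X) : Prop :=
  forall U, nbhd x U ->
    exists V, is_open T V /\ V x /\ subset V U /\
      finite_family (fun W => B W /\ meets W V /\ ~ subset W U).

Definition regular_base_at_nonisolated (B : family X) : Prop :=
  base B /\ forall x, ~ isolated x -> regular_at B x.

Definition open_cover (W : family X) : Prop :=
  (forall U, W U -> is_open T U) /\ (forall x, exists U, W U /\ U x).

Definition star (A : set X) (W : family X) : set X :=
  fun y => exists U, W U /\ meets U A /\ U y.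

Definition strong_development_at_nonisolated (W : nat -> family X) : Prop :=
  (forall i, open_cover (W i)) /\
  (forall x, isolated x -> exists i U, W i U /\ (forall y, U y <-> y = x)) /\
  (forall x, ~ isolated x -> forall U, nbhd x U ->
     exists V i, nbhd x V /\ subset (star V (W i)) U).

End Topo.

(* Main.v *)
Require Import Defs.
From Stdlib Require Import List Classical Arith Lia FunctionalExtensionality PropExtensionality.
From mathcomp Require ssreflect ssrbool eqtype boolp wochoice.

Module WO.
Import ssreflect ssrfun ssrbool eqtype boolp wochoice.
Lemma wo_exists (T : Type) : exists R : T -> T -> Prop,
  (forall P : T -> Prop, (exists x, P x) -> exists z, P z /\ forall y, P y -> R z y) /\
  (forall a b, R a b -> R b a -> a = b).
Proof.
pose T' := classicType T.
have [R HR] := well_ordering_principle T'.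
exists (fun a b : T => R a b = true); split.
- move=> P [x Px].
  have ne : nonempty (fun y : T' => `[< P y >]).
    by exists x; rewrite unfold_in /=; apply/asboolP.
  have [z [[zin lb] _]] := HR _ ne.
  exists z; split.
    by move: zin; rewrite unfold_in /= => /asboolP.
  move=> y Py; apply: lb; rewrite unfold_in /=; exact/asboolP.
- move=> a b Rab Rba.
  have ne : nonempty (fun y : T' => (y == a) || (y == b)).
    by exists a; rewrite unfold_in /= eqxx.
  have Raa : R a a.
    have ne1 : nonempty (fun y : T' => y == a) by exists a; rewrite unfold_in /= eqxx.
    have [z [[zin lb] _]] := HR _ ne1.
    move: zin; rewrite unfold_in /= => /eqP zE; subst z; apply: lb; by rewrite unfold_in /= eqxx.
  have Rbb : R b b.
    have ne1 : nonempty (fun y : T' => y == b) by exists b; rewrite unfold_in /= eqxx.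
    have [z [[zin lb] _]] := HR _ ne1.
    move: zin; rewrite unfold_in /= => /eqP zE; subst z; apply: lb; by rewrite unfold_in /= eqxx.
  have [z [_ uniq]] := HR _ ne.
  have ea : z = a.
    apply: uniq; split; first by rewrite unfold_in /= eqxx.
    by move=> y; rewrite unfold_in /= => /orP [/eqP -> | /eqP ->].
  have eb : z = b.
    apply: uniq; split; first by rewrite unfold_in /= eqxx orbT.
    by move=> y; rewrite unfold_in /= => /orP [/eqP -> | /eqP ->].
  by rewrite -ea -eb.
Qed.
End WO.

Section Gen.
Variables (X : Type) (T : topology X).

Lemma set_ext (A B : set X) : (forall x, A x <-> B x) -> A = B.
Proof. intro H; apply functional_extensionality; intro x; apply propositional_extensionality; auto. Qed.

Lemma open_ext (U V : set X) : is_open T U -> (forall x, U x <-> V x) -> is_open T V.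
Proof. intros HU H; rewrite <- (@set_ext U V H); exact HU. Qed.

Lemma star_open (A : set X) (W : family X) :
  (forall U, W U -> is_open T U) -> is_open T (star A W).
Proof.
  intro HW. apply open_ext with (fun x => exists U, (W U /\ meets U A) /\ U x).
  - apply open_union. intros U [HU _]; auto.
  - intro x; unfold star; split; intros [U H]; exists U; tauto.
Qed.

Lemma star_mono (A A' : set X) (W : family X) :
  subset A A' -> subset (star A W) (star A' W).
Proof.
  intros HA y [U [HU [[z [Uz Az]] Uy]]]. exists U; repeat split; auto. exists z; auto.
Qed.

Lemma star_incl (A : set X) (W : family X) :
  (forall x, exists U, W U /\ U x) -> subset A (star A W).
Proof.
  intros HW x Ax. destruct (HW x) as [U [HU Ux]]. exists U; repeat split; auto. exists x; auto.
Qed.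

Lemma star_refine (A : set X) (W W' : family X) :
  (forall U, W U -> exists U', W' U' /\ subset U U') -> subset (star A W) (star A W').
Proof.
  intros HR y [U [HU [[z [Uz Az]] Uy]]]. destruct (HR U HU) as [U' [HU' sub]].
  exists U'; repeat split; auto. exists z; auto.
Qed.

Lemma nbhd_in x U : nbhd T x U -> U x.
Proof. intros [O [_ [Ox s]]]; auto. Qed.

Lemma open_nbhd x U : is_open T U -> U x -> nbhd T x U.
Proof. intros; exists U; repeat split; auto. intros y; auto. Qed.

Lemma nonisol_other (x : X) (O : set X) : ~ isolated T x -> is_open T O -> O x ->
  exists y, O y /\ y <> x.
Proof.
  intros Hn HO Ox. apply NNPP; intro Hc. apply Hn. unfold isolated.
  apply open_ext with O; auto. intro y; split; intro H.
  - apply NNPP; intro Hy; apply Hc; exists y; auto.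
  - subst; auto.
Qed.

Section Forward.
Variable Bs : family X.
Hypothesis HB : regular_base_at_nonisolated T Bs.
Hypothesis HT1 : T1 T.

Definition chain_of (c : nat -> set X) (n : nat) : Prop :=
  forall k, k < n -> Bs (c k) /\ subset (c (S k)) (c k) /\ ~ subset (c k) (c (S k)).

Definition Wd (n : nat) : family X := fun U =>
  (exists x, isolated T x /\ U = (fun y => y = x)) \/
  (Bs U /\ exists c, c n = U /\ chain_of c n).

Lemma chain_sub c n : chain_of c n -> forall j k, k <= j -> j <= n -> subset (c j) (c k).
Proof.
  intros Hc j. induction j; intros k Hkj Hjn.
  - assert (k = 0) by lia; subst; intros y; auto.
  - destruct (Nat.eq_dec k (S j)) as [->|Hne]; [intros y; auto|].
    intros y Hy. apply (IHj k); try lia. destruct (Hc j) as [_ [s _]]; [lia|]. auto.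
Qed.

Lemma chain_exists x : ~ isolated T x -> forall n, exists c, Bs (c n) /\ c n x /\ chain_of c n.
Proof.
  intros Hn n. induction n.
  - destruct (proj2 (proj1 HB) _ (open_full T) x I) as [B0 [HB0 [B0x _]]].
    exists (fun _ => B0); split; [auto|split; [auto|intros kk Hk; lia]].
  - destruct IHn as [c [Bcn [cnx Hc]]].
    assert (Ocn : is_open T (c n)) by (apply (proj1 (proj1 HB)); auto).
    destruct (@nonisol_other x (c n) Hn Ocn cnx) as [y [cny yx]].
    destruct (HT1 x y) as [O [HO [Ox Oy]]]; [auto|].
    destruct (proj2 (proj1 HB) _ (open_inter T _ _ Ocn HO) x (conj cnx Ox)) as [B' [HB' [B'x sB']]].
    exists (fun k => if Nat.leb k n then c k else B').
    assert (E: Nat.leb (S n) n = false) by (apply Nat.leb_gt; lia).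
    rewrite E. split; [auto|split; [auto|]].
    intros k Hk. assert (E2 : Nat.leb k n = true) by (apply Nat.leb_le; lia). rewrite E2.
    destruct (Nat.eq_dec k n) as [->|Hne].
    + rewrite E. repeat split; auto.
      * intros z Hz; apply (sB' z Hz).
      * intro Hs. apply Oy. apply (sB' y (Hs y cny)).
    + assert (E3 : Nat.leb (S k) n = true) by (apply Nat.leb_le; lia). rewrite E3.
      apply Hc; lia.
Qed.

Lemma nodup_map_seq (c : nat -> set X) : forall len m,
  (forall i j, m <= i -> i < j -> j < m + len -> c i <> c j) -> NoDup (map c (seq m len)).
Proof.
  induction len; intros m H; simpl; constructor.
  - intro Hin. apply in_map_iff in Hin. destruct Hin as [j [Ej Hj]]. apply in_seq in Hj.
    apply (H m j); lia || auto.
  - apply IHlen. intros i j H1 H2 H3; apply H; lia.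
Qed.

Lemma forward : exists W : nat -> family X, strong_development_at_nonisolated T W.
Proof.
  exists Wd. split; [|split].
  - intro n. split.
    + intros U [[x [Hx ->]] | [HU _]]; auto. apply (proj1 (proj1 HB)); auto.
    + intro x. destruct (classic (isolated T x)) as [Hi|Hn].
      * exists (fun y => y = x). split; auto. left; exists x; auto.
      * destruct (chain_exists x Hn n) as [c [Bc [cx Hc]]]. exists (c n); split; auto.
        right; split; auto. exists c; auto.
  - intros x Hx. exists 0, (fun y => y = x). split; [left; exists x; auto|]. intro; tauto.
  - intros x Hn U HU. destruct (proj2 HB x Hn U HU) as [V [HV [Vx [VU [l Hl]]]]].
    exists V, (length l). split; [apply open_nbhd; auto|].
    intros y [U' [HU' [[z [U'z Vz]] U'y]]].
    destruct HU' as [[w [Hw ->]] | [BU' [c [Ecn Hc]]]].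
    + subst. subst. apply VU; auto.
    + apply NNPP; intro Hy.
      set (n := length l) in *.
      assert (Hin : forall k, k <= n -> In (c k) l).
      { intros k Hk. apply Hl. split; [|split].
        - destruct (Nat.eq_dec k n) as [->|]; [rewrite Ecn; auto|]. apply Hc; lia.
        - exists z; split; auto. apply (chain_sub c n Hc n k); [lia|lia|rewrite Ecn; auto].
        - intro Hs. apply Hy. apply Hs. apply (chain_sub c n Hc n k); [lia|lia|rewrite Ecn; auto]. }
      assert (ND : NoDup (map c (seq 0 (S n)))).
      { apply nodup_map_seq. intros i j _ Hij Hjn E.
        destruct (Hc i) as [_ [_ Hst]]; [lia|]. apply Hst. rewrite E.
        apply (chain_sub c n Hc); lia. }
      assert (Inc : incl (map c (seq 0 (S n))) l).
      { intros s Hs. apply in_map_iff in Hs. destruct Hs as [k [<- Hk]]. apply in_seq in Hk.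
        apply Hin; lia. }
      pose proof (NoDup_incl_length ND Inc) as Hlen. rewrite length_map, length_seq in Hlen.
      unfold n in Hlen; lia.
Qed.

End Forward.

Section Backward.
Variable W : nat -> family X.
Hypothesis HW : strong_development_at_nonisolated T W.

Fixpoint H (n : nat) : family X :=
  match n with
  | 0 => W 0
  | S n => fun A => exists B C, H n B /\ W (S n) C /\ A = (fun x => B x /\ C x)
  end.

Lemma H_open n A : H n A -> is_open T A.
Proof.
  revert A; induction n; intros A HA; simpl in HA.
  - apply (proj1 (proj1 HW 0)); auto.
  - destruct HA as [B [C [HB [HC ->]]]]. apply open_inter; auto.
    apply (proj1 (proj1 HW (S n))); auto.
Qed.

Lemma H_cover n x : exists A, H n A /\ A x.
Proof.
  induction n; simpl.
  - apply (proj2 (proj1 HW 0)).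
  - destruct IHn as [B [HB Bx]]. destruct (proj2 (proj1 HW (S n)) x) as [C [HC Cx]].
    exists (fun x => B x /\ C x); split; auto. exists B, C; auto.
Qed.

Lemma H_inW n A : H n A -> exists C, W n C /\ subset A C.
Proof.
  destruct n; simpl; intro HA.
  - exists A; split; auto. intros y; auto.
  - destruct HA as [B [C [HB [HC ->]]]]. exists C; split; auto. intros y [_ ?]; auto.
Qed.

Lemma H_step n A : H (S n) A -> exists B, H n B /\ subset A B.
Proof.
  simpl; intros [B [C [HB [HC ->]]]]. exists B; split; auto. intros y [? _]; auto.
Qed.

Lemma H_refW : forall n i, i <= n -> forall A, H n A -> exists A', W i A' /\ subset A A'.
Proof.
  induction n; intros i Hi A HA.
  - assert (i = 0) by lia; subst. apply H_inW; auto.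
  - destruct (Nat.eq_dec i (S n)) as [->|Hne]; [apply H_inW; auto|].
    destruct (H_step n A HA) as [B [HB sB]]. destruct (IHn i ltac:(lia) B HB) as [A' [HA' s']].
    exists A'; split; auto. intros y Hy; auto.
Qed.

Lemma H_ref_mono : forall n k, k <= n -> forall A, H n A -> exists A', H k A' /\ subset A A'.
Proof.
  induction n; intros k Hk A HA.
  - assert (k = 0) by lia; subst. exists A; split; auto; intros y; auto.
  - destruct (Nat.eq_dec k (S n)) as [->|Hne]; [exists A; split; auto; intros y; auto|].
    destruct (H_step n A HA) as [B [HB sB]]. destruct (IHn k ltac:(lia) B HB) as [A' [HA' s']].
    exists A'; split; auto. intros y Hy; auto.
Qed.

Lemma Hcov n : forall x, exists A, H n A /\ A x.
Proof. intro; apply H_cover. Qed.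

Lemma P1 x : ~ isolated T x -> forall U, nbhd T x U ->
  exists V n0, nbhd T x V /\ forall n, n0 <= n -> subset (star V (H n)) U.
Proof.
  intros Hn U HU. destruct (proj2 (proj2 HW) x Hn U HU) as [V [i [HV sV]]].
  exists V, i. split; auto. intros n Hin y Hy. apply sV.
  apply (star_refine V (H n) (W i)); auto. intros A HA. apply (H_refW n i Hin A HA).
Qed.

Definition st3 n (y : X) : set X :=
  star (star (star (fun z => z = y) (H n)) (H n)) (H n).

Lemma P3 x : ~ isolated T x -> forall U, nbhd T x U ->
  exists n0, forall n, n0 <= n -> subset (st3 n x) U.
Proof.
  intros Hn U HU.
  destruct (P1 x Hn U HU) as [V1 [a [HV1 s1]]].
  destruct (P1 x Hn V1 HV1) as [V2 [b [HV2 s2]]].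
  destruct (P1 x Hn V2 HV2) as [V3 [c [HV3 s3]]].
  exists (a + b + c). intros n Hle y Hy. apply (s1 n ltac:(lia)).
  revert y Hy. apply star_mono. intros y Hy. apply (s2 n ltac:(lia)).
  revert y Hy. apply star_mono. intros y Hy. apply (s3 n ltac:(lia)).
  revert y Hy. apply star_mono. intros y Hy. subst. apply (@nbhd_in x V3 HV3).
Qed.

Section Level.
Variable R : set X -> set X -> Prop.
Hypothesis Rmin : forall P : set X -> Prop, (exists x, P x) -> exists z, P z /\ forall y, P y -> R z y.
Hypothesis Ranti : forall a b, R a b -> R b a -> a = b.
Variable m : nat.

Definition isig (y : X) (A : set X) : Prop :=
  H m A /\ A y /\ forall A', H m A' -> A' y -> R A A'.

Definition Ed n (C : set X) (A : set X) : set X :=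
  fun y => isig y A /\ ~ C y /\ subset (st3 n y) A.

Fixpoint Cov (n : nat) : set X :=
  match n with
  | 0 => fun _ => False
  | S n => fun z => Cov n z \/ exists A, star (Ed n (Cov n) A) (H n) z
  end.

Definition D n A := star (Ed n (Cov n) A) (H n).

Definition Bm : family X := fun S => exists n A, H m A /\ S = D n A.

Lemma st1_st3 n y : subset (star (fun z => z = y) (H n)) (st3 n y).
Proof.
  intros z Hz. unfold st3. apply star_incl; [apply Hcov|]. apply star_incl; [apply Hcov|]. auto.
Qed.

Lemma D_sub n A : subset (D n A) A.
Proof.
  intros z [U [HU [[y [Uy Ey]] Uz]]]. destruct Ey as [_ [_ s]]. apply s.
  apply st1_st3. exists U; repeat split; auto. exists y; auto.
Qed.

Lemma D_open n A : is_open T (D n A).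
Proof. apply star_open. apply H_open. Qed.

Lemma Cov_D : forall n z, Cov n z -> exists j A, j < n /\ D j A z.
Proof.
  induction n; simpl; intros z Hz; [contradiction|].
  destruct Hz as [Hz | [A HA]].
  - destruct (IHn z Hz) as [j [A [Hj HA]]]. exists j, A; split; auto; lia.
  - exists n, A; split; auto.
Qed.

Lemma D_Cov : forall n j A z, j < n -> D j A z -> Cov n z.
Proof.
  induction n; intros j A z Hj HD; [lia|]. simpl.
  destruct (Nat.eq_dec j n) as [->|Hne].
  - right; exists A; auto.
  - left; apply (IHn j A); auto; lia.
Qed.

Lemma D_cover x : ~ isolated T x -> exists n A, H m A /\ D n A x.
Proof.
  intro Hn.
  destruct (Rmin (fun A => H m A /\ A x) (H_cover m x)) as [A [[HA Ax] Amin]].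
  destruct (P3 x Hn A (@open_nbhd x A (@H_open m A HA) Ax)) as [n0 Hn0].
  destruct (classic (Cov n0 x)) as [Hc|Hc].
  - destruct (Cov_D n0 x Hc) as [j [A' [_ HD]]]. exists j, A'. split; auto.
    destruct HD as [U [_ [[y [_ [[HA' _] _]]] _]]]. auto.
  - exists n0, A. split; auto. destruct (H_cover n0 x) as [U [HU Ux]].
    exists U; split; [auto|split; [|auto]]. exists x; split; [auto|].
    unfold Ed; split; [|split; [auto|apply Hn0; auto]]. split; [auto|split; [auto|]].
    intros A' HA' A'x. apply Amin; auto.
Qed.

Lemma D_unique n P A A' : H n P -> meets (D n A) P -> meets (D n A') P -> A = A'.
Proof.
  intros HP [z [[U [HU [[y [Uy Ey]] Uz]]] Pz]] [z' [[U' [HU' [[y' [U'y' Ey']] U'z']]] Pz']].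
  assert (Hy'A : A y').
  { destruct Ey as [_ [_ s]]. apply s. exists U'; split; auto; split; auto.
    exists z'; split; auto. exists P; split; auto; split; auto.
    exists z; split; auto. exists U; split; auto; split; auto. exists y; auto. }
  assert (HyA' : A' y).
  { destruct Ey' as [_ [_ s]]. apply s. exists U; split; auto; split; auto.
    exists z; split; auto. exists P; split; auto; split; auto.
    exists z'; split; auto. exists U'; split; auto; split; auto. exists y'; auto. }
  destruct Ey as [[HA [Ay mA]] _]. destruct Ey' as [[HA' [A'y' mA']] _].
  apply Ranti; [apply mA|apply mA']; auto.
Qed.

Lemma D_far x j A0 : ~ isolated T x -> D j A0 x ->
  exists V N, nbhd T x V /\ forall n A, N <= n -> ~ meets (D n A) V.
Proof.
  intros Hn HD.
  destruct (P1 x Hn (D j A0) (@open_nbhd x (D j A0) (D_open j A0) HD)) as [V [n0 [HV sV]]].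
  exists V, (n0 + S j). split; auto.
  intros n A Hle [z [[U [HU [[y [Uy Ey]] Uz]]] Vz]].
  destruct Ey as [_ [Hc _]]. apply Hc. apply (D_Cov n j A0 y); [lia|].
  apply (sV n ltac:(lia)). exists U; split; auto; split; auto. exists z; auto.
Qed.

Lemma locfin x : ~ isolated T x ->
  exists O, is_open T O /\ O x /\ exists l, forall S, Bm S -> meets S O -> In S l.
Proof.
  intro Hn. destruct (D_cover x Hn) as [j [A0 [_ HD]]].
  destruct (@D_far x j A0 Hn HD) as [V [N [[O0 [HO0 [O0x sO0]]] far]]].
  assert (Ind : forall K, exists O, is_open T O /\ O x /\ subset O O0 /\
     exists l, forall n A, n < K -> H m A -> meets (D n A) O -> In (D n A) l).
  { induction K.
    - exists O0; split; auto; split; auto; split; [intros y; auto|]. exists nil; intros; lia.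
    - destruct IHK as [O [HO [Ox [sO [l Hl]]]]].
      destruct (H_cover K x) as [P [HP Px]].
      exists (fun y => O y /\ P y). split; [apply open_inter; auto; apply H_open with K; auto|].
      split; [auto|]. split; [intros y [? _]; auto|].
      destruct (classic (exists A, H m A /\ meets (D K A) (fun y => O y /\ P y))) as [[A1 [HA1 M1]]|Hno].
      + exists (D K A1 :: l). intros n A Hlt HA [w [Dw [Ow Pw]]].
        destruct (Nat.eq_dec n K) as [->|Hne].
        * left. f_equal. apply (D_unique K P A1 A HP).
          -- destruct M1 as [w' [? [? ?]]]; exists w'; auto.
          -- exists w; auto.
        * right. apply Hl; [lia|auto|]. exists w; auto.
      + exists l. intros n A Hlt HA [w [Dw [Ow Pw]]].
        destruct (Nat.eq_dec n K) as [->|Hne].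
        * exfalso; apply Hno; exists A; split; auto; exists w; auto.
        * apply Hl; [lia|auto|]. exists w; auto. }
  destruct (Ind N) as [O [HO [Ox [sO [l Hl]]]]].
  exists O; split; auto; split; auto; exists l.
  intros S [n [A [HA ->]]] M. destruct (Nat.lt_ge_cases n N) as [Hlt|Hge].
  - apply Hl; auto.
  - exfalso. apply (far n A Hge). destruct M as [w [? ?]]; exists w; split; auto.
Qed.

End Level.

End Backward.

Lemma backward (W : nat -> family X) : strong_development_at_nonisolated T W ->
  exists B : family X, regular_base_at_nonisolated T B.
Proof.
  intro HW.
  destruct (WO.wo_exists (set X)) as [R [Rmin Ranti]].
  pose (Bf := fun S : set X => (exists x, isolated T x /\ S = (fun y => y = x)) \/
                               exists m, Bm W R m S).
  exists Bf. split; [split|].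
  - intros U [[x [Hx ->]] | [m [n [A [HA ->]]]]]; [exact Hx|]. apply (D_open W HW R m n A).
  - intros U HU x Ux. destruct (classic (isolated T x)) as [Hi|Hn].
    + exists (fun y => y = x). split; [left; exists x; auto|]. split; auto.
      intros y ->; auto.
    + destruct (P1 W HW x Hn U (open_nbhd x U HU Ux)) as [V [n0 [HV sV]]].
      destruct (D_cover W HW R Rmin n0 x Hn) as [n [A [HA HD]]].
      exists (D W R n0 n A). split; [right; exists n0, n, A; auto|]. split; auto.
      intros z Hz. apply (sV n0 (le_n _)). exists A. split; auto. split.
      * exists x; split; [apply (D_sub W HW R n0 n A x HD)|apply (nbhd_in x V HV)].
      * apply (D_sub W HW R n0 n A z Hz).
  - intros x Hn U HU.
    destruct (P1 W HW x Hn U HU) as [V0 [m0 [HV0 sV]]].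
    destruct HV0 as [O0 [HO0 [O0x sO0]]].
    assert (Ind : forall M, exists O, is_open T O /\ O x /\ subset O O0 /\
       exists l, forall m S, m < M -> Bm W R m S -> meets S O -> In S l).
    { induction M.
      - exists O0; split; auto; split; auto; split; [intros y; auto|]. exists nil; intros; lia.
      - destruct IHM as [O [HO [Ox [sO [l Hl]]]]].
        destruct (locfin W HW R Rmin Ranti M x Hn) as [O' [HO' [O'x [l' Hl']]]].
        exists (fun y => O y /\ O' y). split; [apply open_inter; auto|].
        split; [auto|]. split; [intros y [? _]; auto|].
        exists (l ++ l'). intros m S Hm HS [w [Sw [Ow O'w]]]. apply in_or_app.
        destruct (Nat.eq_dec m M) as [->|Hne].
        + right. apply Hl'; auto. exists w; auto.
        + left. apply (Hl m); auto; [lia|]. exists w; auto. }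
    destruct (Ind m0) as [O [HO [Ox [sO [l Hl]]]]].
    assert (OU : subset O U).
    { intros y Hy. apply (sV m0 (le_n _)). apply star_incl; [apply (Hcov W HW)|]. auto. }
    exists O. split; auto; split; auto; split; auto. exists l.
    intros S [[[z [Hz ->]] | [m HS]] [[w [Sw Ow]] Hns]].
    + exfalso. apply Hns. intros y Hy; subst; subst; auto.
    + destruct (Nat.lt_ge_cases m m0) as [Hlt|Hge].
      * apply (Hl m); auto. exists w; auto.
      * exfalso. apply Hns. destruct HS as [n [A [HA ->]]].
        intros y Hy. apply (sV m Hge). exists A. split; auto. split.
        -- exists w; split; [apply (D_sub W HW R m n A w Sw)|auto].
        -- apply (D_sub W HW R m n A y Hy).
Qed.

End Gen.

Theorem mainTheorem5 (X : Type) (T : topology X) :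
  T1 T ->
  ((exists B : family X, regular_base_at_nonisolated T B) <->
   (exists W : nat -> family X, strong_development_at_nonisolated T W)).
Proof.
  intro HT1. split.
  - intros [B HB]. exact (forward X T B HB HT1).
  - intros [W HW]. exact (backward X T W HW).
Qed.
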